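(* Under the hypotheses and notation of the context, for every $p\in(0,1)$ the family $\alpha(p;b,s,s')=\tilde\alpha(p;b,s,s')$ ($b\in\Lambda$, $s,s'\in S$) is the unique family of nonnegative real numbers $(a(b,s,s'))_{b\in\Lambda,\,s,s'\in S}$ satisfying $\sum_{s'\in S}a(b,s,s')=1$ for all $b,s$, and, for all $b,s,s'$, $$a(b,s,s')=\sum_{x\in\{0,1\}}\pi_x\,Q_x(b,s,s'),$$ where $\pi_1=p$, $\pi_0=1-p$, and, writing $\rho(s,x,b)=c_1\cdots c_r$ and $t=\sigma(s,x,b)$: if $r=0$ then $Q_x(b,s,s')=\mathbf 1\{t=s'\}$, and if $r>0$ then $Q_x(b,s,s')=\sum\prod_{i=1}^r a(c_i,t_i,t_{i+1})$, the sum running over all $(t_1,\dots,t_{r+1})\in S^{r+1}$ with $t_1=t$ and $t_{r+1}=s'$.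
   Context: A (deterministic) pushdown automaton over input alphabet $\{0,1\}$ consists of a finite state set $S$, a finite stack alphabet $\Lambda$, and a transition map assigning to each $(s,x,b)\in S\times\{0,1\}\times\Lambda$ a new state $\sigma(s,x,b)\in S$ and a word $\rho(s,x,b)\in\Lambda^*$. At each step it reads one input bit $x$ (input bits are i.i.d., equal to $1$ with probability $p$); in state $s$ with stack $bu$ ($b$ the top, i.e. leftmost, symbol) it moves to state $\sigma(s,x,b)$ with stack $\rho(s,x,b)u$; when the stack is empty it stops. Standing assumption: for every $b\in\Lambda$, $s\in S$, $w\in\Lambda^*$ and $p\in(0,1)$, started in state $s$ with stack $bw$, almost surely the stack content eventually equals $w$. For $u\in\Lambda^*$, $\tilde\alpha(p;u,s,s')$ denotes the probability that, started in state $s$ with stack $uw$, at the first time the stack content equals $w$ the automaton is in state $s'$ (independent of $w$). *)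

(* Defs.v *)
From HB Require Import structures.
From mathcomp Require Import all_boot all_order all_algebra.
From mathcomp Require Import all_classical all_reals all_analysis.
Set Implicit Arguments. Unset Strict Implicit. Unset Printing Implicit Defensive.
Import Order.TTheory GRing.Theory Num.Theory.
Import numFieldNormedType.Exports.
Local Open Scope ring_scope.

Section PDA.
Variables (R : realType) (S L : finType).
(* transition map: input bit x : bool (true = 1) *)
Variables (sigma : S -> bool -> L -> S) (rho : S -> bool -> L -> seq L).

Definition pda_step (c : S * seq L) (x : bool) : S * seq L :=
  match c.2 with
  | [::] => c
  | b :: u => (sigma c.1 x b, rho c.1 x b ++ u)
  end.

Definition pda_run (c : S * seq L) (xs : seq bool) : S * seq L :=
  foldl pda_step c xs.

Definition bits_weight (p : R) (xs : seq bool) : R :=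
  \prod_(x <- xs) (if x then p else 1 - p).

Definition first_hit_at (s : S) (v w : seq L) (s' : S) (xs : seq bool) : bool :=
  [&& (pda_run (s, v) xs == (s', w))
    & all (fun k => (pda_run (s, v) (take k xs)).2 != w) (iota 0 (size xs))].

Definition first_hit_prob (p : R) (s : S) (v w : seq L) (s' : S) (n : nat) : R :=
  \sum_(xs : n.-tuple bool | first_hit_at s v w s' xs) bits_weight p xs.

(* probability that, started in s with stack v, the stack content eventually
   equals w and at the first such time the state is s'
   (countable disjoint union over the hitting time n) *)
Definition hit_prob (p : R) (s : S) (v w : seq L) (s' : S) : R :=
  limn (series (first_hit_prob p s v w s')).

(* alpha~(p; u, s, s') : started in s with stack u w, in state s' at the first
   time the stack equals w; we take w = [::] (independent of w) *)
Definition alpha_tilde (p : R) (u : seq L) (s s' : S) : R :=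
  hit_prob p s u [::] s'.

Definition Qx (a : L -> S -> S -> R) (x : bool) (b : L) (s s' : S) : R :=
  let cs := rho s x b in
  let t := sigma s x b in
  if size cs == 0%N then (t == s')%:R
  else \sum_(ts : {ffun 'I_(size cs).+1 -> S} |
              (ts ord0 == t) && (ts ord_max == s'))
         \prod_(i < size cs)
            a (tnth (in_tuple cs) i) (ts (widen_ord (leqnSn _) i)) (ts (lift ord0 i)).

Definition alpha_system (p : R) (a : L -> S -> S -> R) : Prop :=
  (forall b s s', 0 <= a b s s')
  /\ (forall b s, \sum_(s' : S) a b s s' = 1)
  /\ (forall b s s', a b s s' = p * Qx a true b s s' + (1 - p) * Qx a false b s s').

End PDA.

(* Main.v *)
Require Import Defs.
From HB Require Import structures.
From mathcomp Require Import all_boot all_order all_algebra.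
From mathcomp Require Import all_classical all_reals all_analysis.
Import Order.TTheory GRing.Theory Num.Theory.
Import numFieldNormedType.Exports.
Local Open Scope ring_scope.
Set Implicit Arguments. Unset Strict Implicit. Unset Printing Implicit Defensive.

Section Aux.
Variables (R : realType) (S L : finType).
Variables (sigma : S -> bool -> L -> S) (rho : S -> bool -> L -> seq L).
Variable (p : R).

Lemma sum_tuple_split n (P : seq bool -> bool) :
  \sum_(xs : n.+1.-tuple bool | P xs) bits_weight p xs =
  p * \sum_(ys : n.-tuple bool | P (true :: ys)) bits_weight p ys +
  (1 - p) * \sum_(ys : n.-tuple bool | P (false :: ys)) bits_weight p ys.
Proof.
rewrite !mulr_sumr.
have -> : \sum_(ys : n.-tuple bool | P (true :: ys)) p * bits_weight p ys
  + \sum_(ys : n.-tuple bool | P (false :: ys)) (1 - p) * bits_weight p ys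
  = \sum_(x : bool) \sum_(ys : n.-tuple bool | P (x :: ys))
        (if x then p else 1 - p) * bits_weight p ys by rewrite big_bool.
rewrite pair_big_dep /=.
rewrite (reindex (fun xy : bool * n.-tuple bool => [tuple of xy.1 :: xy.2])) /=.
  apply: eq_big => [[x ys]|[x ys] _] //=.
  by rewrite /bits_weight big_cons.
exists (fun t : n.+1.-tuple bool => (thead t, behead_tuple t)).
  by move=> [x ys] _ /=; congr pair; apply: val_inj.
move=> t _; case/tupleP: t => x ys; by apply: val_inj.
Qed.

Lemma sum_tuple0 (P : seq bool -> bool) :
  \sum_(xs : 0.-tuple bool | P xs) bits_weight p xs = (P [::])%:R.
Proof.
rewrite big_mkcond.
rewrite (eq_bigr (fun _ => (P [::])%:R)) => [|xs _]; last by rewrite (tuple0 xs) /bits_weight big_nil; case: (P _).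
by rewrite sumr_const card_tuple expn0 mulr1n.
Qed.

Definition fh (n : nat) (u : seq L) (s s' : S) : R :=
  first_hit_prob sigma rho p s u [::] s' n.

Lemma fha_nil s u s' :
  first_hit_at sigma rho s u [::] s' [::] = (u == [::]) && (s == s').
Proof. by rewrite /first_hit_at /= andbT xpair_eqE andbC. Qed.

Lemma fha_nilS s s' x xs :
  first_hit_at sigma rho s [::] [::] s' (x :: xs) = false.
Proof. by rewrite /first_hit_at /= andbF. Qed.

Lemma fha_cons s b u s' x xs :
  first_hit_at sigma rho s (b :: u) [::] s' (x :: xs) =
  first_hit_at sigma rho (sigma s x b) (rho s x b ++ u) [::] s' xs.
Proof.
rewrite /first_hit_at /=; congr andb.
rewrite -(addn0 1%N) iotaDl all_map; apply: eq_all => k /=.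
by [].
Qed.

Lemma fh0 u s s' : fh 0 u s s' = ((u == [::]) && (s == s'))%:R.
Proof.
by rewrite /fh /first_hit_prob (sum_tuple0 (first_hit_at sigma rho s u [::] s')) fha_nil.
Qed.

Lemma fhS_nil n s s' : fh n.+1 [::] s s' = 0.
Proof.
rewrite /fh /first_hit_prob (sum_tuple_split _ (first_hit_at sigma rho s [::] [::] s')).
by rewrite !big_pred0 ?mulr0 ?addr0 // => ys; rewrite fha_nilS.
Qed.

Lemma fhS_cons n b u s s' : fh n.+1 (b :: u) s s' =
  p * fh n (rho s true b ++ u) (sigma s true b) s' +
  (1 - p) * fh n (rho s false b ++ u) (sigma s false b) s'.
Proof.
rewrite /fh /first_hit_prob (sum_tuple_split _ (first_hit_at sigma rho s (b :: u) [::] s')).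
by congr (_ * _ + _ * _); apply: eq_bigl => ys; rewrite fha_cons.
Qed.

Definition Pn (N : nat) (u : seq L) (s s' : S) : R := \sum_(0 <= n < N) fh n u s s'.

Lemma Pn0 u s s' : Pn 0 u s s' = 0.
Proof. by rewrite /Pn big_geq. Qed.

Lemma PnS_nil N s s' : Pn N.+1 [::] s s' = (s == s')%:R.
Proof.
rewrite /Pn big_nat_recl // fh0 /= big1 ?addr0 // => i _; exact: fhS_nil.
Qed.

Lemma PnS_cons N b u s s' : Pn N.+1 (b :: u) s s' =
  p * Pn N (rho s true b ++ u) (sigma s true b) s' +
  (1 - p) * Pn N (rho s false b ++ u) (sigma s false b) s'.
Proof.
rewrite /Pn big_nat_recl // fh0 /= add0r.
under eq_bigr do rewrite fhS_cons.
by rewrite big_split /= !mulr_sumr.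
Qed.

Hypothesis hp : 0 <= p <= 1.

Lemma p_ge0 : 0 <= p. Proof. by case/andP: hp. Qed.
Lemma q_ge0 : 0 <= 1 - p. Proof. by case/andP: hp => _; rewrite subr_ge0. Qed.

Lemma bw_ge0 xs : 0 <= bits_weight p xs.
Proof.
rewrite /bits_weight; apply: prodr_ge0 => x _; case: x; [exact: p_ge0|exact: q_ge0].
Qed.

Lemma fh_ge0 n u s s' : 0 <= fh n u s s'.
Proof. by apply: sumr_ge0 => xs _; apply: bw_ge0. Qed.

Lemma Pn_ge0 N u s s' : 0 <= Pn N u s s'.
Proof. by apply: sumr_ge0 => n _; apply: fh_ge0. Qed.

Lemma PnSr N u s s' : Pn N u s s' <= Pn N.+1 u s s'.
Proof. by rewrite /Pn big_nat_recr //= lerDl fh_ge0. Qed.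

Lemma Pn_le N M u s s' : (N <= M)%N -> Pn N u s s' <= Pn M u s s'.
Proof.
move=> /subnKC <-; elim: (M - N)%N => [|k IH]; first by rewrite addn0.
by rewrite addnS; apply: le_trans IH (PnSr _ _ _ _).
Qed.

Lemma sum_delta (s : S) : \sum_(s' : S) ((s == s')%:R : R) = 1.
Proof.
rewrite (bigD1 s) //= eqxx big1 ?addr0 // => s' /negbTE.
by rewrite eq_sym => ->.
Qed.

Lemma sum_delta_mul (s : S) (F : S -> R) : \sum_(s' : S) (s == s')%:R * F s' = F s.
Proof.
rewrite (bigD1 s) //= eqxx mul1r big1 ?addr0 // => s' /negbTE.
by rewrite eq_sym => ->; rewrite mul0r.
Qed.

Lemma Pn_sum_le1 N u s : \sum_(s' : S) Pn N u s s' <= 1.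
Proof.
elim: N u s => [|N IH] u s.
  by under eq_bigr do rewrite Pn0; rewrite big1 // ler01.
case: u => [|b u].
  by under eq_bigr do rewrite PnS_nil; rewrite sum_delta.
under eq_bigr do rewrite PnS_cons.
rewrite big_split /= -!mulr_sumr.
apply: le_trans (_ : p * 1 + (1 - p) * 1 <= 1); last by rewrite !mulr1 subrKC.
by apply: lerD; apply: ler_wpM2l; rewrite ?p_ge0 ?q_ge0 ?IH.
Qed.

Lemma Pn_le1 N u s s' : Pn N u s s' <= 1.
Proof.
apply: le_trans (Pn_sum_le1 N u s).
rewrite (bigD1 s') //= lerDl; apply: sumr_ge0 => i _; exact: Pn_ge0.
Qed.

Lemma Pn_cat N u1 u2 s s'' :
  Pn N (u1 ++ u2) s s'' <= \sum_(s' : S) Pn N u1 s s' * Pn N u2 s' s''.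
Proof.
elim: N u1 s => [|N IH] u1 s.
  by rewrite Pn0; apply: sumr_ge0 => i _; apply: mulr_ge0; apply: Pn_ge0.
case: u1 => [|b u1].
  by under eq_bigr do rewrite PnS_nil; rewrite sum_delta_mul.
rewrite cat_cons PnS_cons.
under eq_bigr do rewrite PnS_cons mulrDl -!mulrA.
rewrite big_split /= -!mulr_sumr.
apply: lerD; apply: ler_wpM2l; rewrite ?p_ge0 ?q_ge0 // catA;
  (apply: le_trans; first exact: IH);
  apply: ler_sum => i _; (apply: ler_wpM2l; [exact: Pn_ge0|exact: PnSr]).
Qed.

Fixpoint G (a : L -> S -> S -> R) (cs : seq L) (t s' : S) : R :=
  if cs is c :: cs' then \sum_(t2 : S) a c t t2 * G a cs' t2 s' else (t == s')%:R.

Lemma G_ge0 a cs t s' : (forall c t t', 0 <= a c t t') -> 0 <= G a cs t s'.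
Proof.
move=> a0; elim: cs t => [|c cs IH] t /=; first by case: (t == s').
by apply: sumr_ge0 => i _; apply: mulr_ge0.
Qed.

Lemma G_mono a1 a2 cs t s' : (forall c t t', 0 <= a1 c t t') ->
  (forall c t t', a1 c t t' <= a2 c t t') -> G a1 cs t s' <= G a2 cs t s'.
Proof.
move=> a0 a12; elim: cs t => [|c cs IH] t //=.
apply: ler_sum => i _; apply: ler_pM => //; exact: G_ge0.
Qed.

Lemma G_sum a cs t : (forall c t, \sum_(t' : S) a c t t' = 1) ->
  \sum_(s' : S) G a cs t s' = 1.
Proof.
move=> a1; elim: cs t => [|c cs IH] t /=; first exact: sum_delta.
rewrite exchange_big /=; under eq_bigr do rewrite -mulr_sumr IH mulr1.
exact: a1.
Qed.

Lemma Pn_G N cs t s' : Pn N cs t s' <= G (fun c => Pn N [:: c]) cs t s'.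
Proof.
elim: cs t => [|c cs IH] t /=.
  by case: N => [|N]; rewrite ?Pn0 ?PnS_nil //; case: (t == s').
apply: le_trans (Pn_cat N [:: c] cs t s') _.
apply: ler_sum => i _; apply: ler_wpM2l; [exact: Pn_ge0|exact: IH].
Qed.

Definition fcons n (x : S) (g : {ffun 'I_n -> S}) : {ffun 'I_n.+1 -> S} :=
  [ffun i => if unlift ord0 i is Some j then g j else x].
Arguments fcons {n}.

Lemma fcons0 n x (g : {ffun 'I_n -> S}) : fcons x g ord0 = x.
Proof. by rewrite ffunE unlift_none. Qed.

Lemma fconsS n x (g : {ffun 'I_n -> S}) j : fcons x g (lift ord0 j) = g j.
Proof. by rewrite ffunE liftK. Qed.

Lemma sum_ffunS n (F : {ffun 'I_n.+1 -> S} -> R) :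
  \sum_(ts : {ffun 'I_n.+1 -> S}) F ts =
  \sum_(x : S) \sum_(g : {ffun 'I_n -> S}) F (fcons x g).
Proof.
rewrite pair_big /=.
rewrite (reindex (fun xg : S * {ffun 'I_n -> S} => fcons xg.1 xg.2)) //.
exists (fun ts : {ffun 'I_n.+1 -> S} => (ts ord0, [ffun j => ts (lift ord0 j)])).
  move=> [x g] _ /=; rewrite fcons0; congr pair.
  by apply/ffunP => j; rewrite ffunE fconsS.
move=> ts _ /=; apply/ffunP => i; rewrite ffunE.
by case: unliftP => [j ->|->]; rewrite ?ffunE.
Qed.

Lemma TG a cs t s' :
  \sum_(ts : {ffun 'I_(size cs).+1 -> S} | (ts ord0 == t) && (ts ord_max == s'))
     \prod_(i < size cs)
        a (tnth (in_tuple cs) i) (ts (widen_ord (leqnSn _) i)) (ts (lift ord0 i))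
  = G a cs t s'.
Proof.
elim: cs t s' => [|c cs IH] t s' /=.
  rewrite big_mkcond sum_ffunS /=.
  transitivity (\sum_(x : S) \sum_(g : {ffun 'I_0 -> S}) (((x == t) && (x == s'))%:R : R)).
    apply: eq_bigr => x _; apply: eq_bigr => g _.
    rewrite big_ord0 (_ : @ord_max 0 = ord0); last exact: val_inj.
    by rewrite fcons0; case: (_ && _).
  under eq_bigr do rewrite sumr_const card_ffun card_ord expn0 mulr1n.
  rewrite (bigD1 t) //= eqxx /= big1 ?addr0; last by move=> x /negbTE ->.
  by case: (t == s').
rewrite big_mkcond sum_ffunS /=.
under eq_bigr => x _.
  under eq_bigr => g _.
    rewrite fcons0 (_ : ord_max = lift ord0 ord_max); last exact: val_inj.
    rewrite fconsS big_ord_recl.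
    rewrite (_ : widen_ord (leqnSn _) ord0 = ord0 :> 'I_(size cs).+2); last exact: val_inj.
    rewrite fcons0 fconsS.
    under eq_bigr => i _.
      rewrite (_ : widen_ord (leqnSn _) (lift ord0 i) = lift ord0 (widen_ord (leqnSn _) i)); last exact: val_inj.
      rewrite !fconsS (_ : tnth (in_tuple (c :: cs)) (lift ord0 i) = tnth (in_tuple cs) i); last first.
        by rewrite !(tnth_nth c).
      over.
    rewrite (_ : tnth (in_tuple (c :: cs)) ord0 = c); last by [].
    over.
  over.
rewrite /= (bigD1 t) //= [X in _ + X]big1 ?addr0; last first.
  by move=> x /negbTE xt; apply: big1 => g _; rewrite xt.
rewrite eqxx /=.
under [in RHS]eq_bigr => t2 _ do rewrite -(IH t2 s') big_mkcond mulr_sumr.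
rewrite exchange_big /=; apply: eq_bigr => g _.
rewrite (bigD1 (g ord0)) //= eqxx /= [X in _ + X]big1 ?addr0; last first.
  by move=> y /negbTE; rewrite eq_sym => ->; rewrite mulr0.
by case: (g ord_max == s'); rewrite ?mulr0.
Qed.

Lemma Qx_G a x b s s' : Qx sigma rho a x b s s' = G a (rho s x b) (sigma s x b) s'.
Proof.
rewrite /Qx /=; case: ifP => [/eqP|_]; last exact: TG.
by case: (rho s x b).
Qed.

End Aux.

Lemma sum_eq_le (S : finType) (R : realType) (x y : S -> R) :
  (forall s, x s <= y s) -> \sum_s x s = \sum_s y s -> forall s, x s = y s.
Proof.
move=> xy e s.
have h : \sum_s (y s - x s) = 0 by rewrite sumrB e subrr.
apply/eqP; rewrite eq_sym -subr_eq0; apply/eqP.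
have := @psumr_eq0P R S predT (fun i => y i - x i).
by apply => // i _; rewrite subr_ge0.
Qed.


Section Lim.
Variables (R : realType) (S L : finType).
Variables (sigma : S -> bool -> L -> S) (rho : S -> bool -> L -> seq L).
Variable (p : R).
Hypothesis hp : 0 <= p <= 1.

Let P N u s s' := Pn sigma rho p N u s s'.

Lemma Pn_cvg u s s' : cvgn (fun N => P N u s s').
Proof.
apply: (cvgP (sup (range (fun N => P N u s s')))).
apply: nondecreasing_cvgn.
  by move=> n m nm; apply: Pn_le.
by exists 1 => _ [n _ <-]; apply: Pn_le1.
Qed.

Lemma Pn_le_lim N u s s' : P N u s s' <= limn (fun N => P N u s s').
Proof.
apply: (nondecreasing_cvgn_le (u_ := fun N => P N u s s')); last exact: Pn_cvg.
by move=> n m nm; apply: Pn_le.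
Qed.

Lemma lim_Pn_le u s s' c : (forall N, P N u s s' <= c) -> limn (fun N => P N u s s') <= c.
Proof.
move=> h; apply: limr_le; first exact: Pn_cvg.
exact: nearW.
Qed.

Lemma lim_Pn_sum u s :
  limn (fun N => \sum_(s' : S) P N u s s') = \sum_(s' : S) limn (fun N => P N u s s').
Proof.
apply: cvg_lim; first exact: Rhausdorff.
apply: cvg_big; first exact: add_continuous.
by move=> s' _; apply: Pn_cvg.
Qed.

End Lim.

Unset Implicit Arguments.

Theorem claim3p2 (R : realType) (S L : finType)
  (sigma : S -> bool -> L -> S) (rho : S -> bool -> L -> seq L)
  (standing : forall (b : L) (s : S) (w : seq L) (q : R), 0 < q < 1 ->
     limn (series (fun n => \sum_(s' : S) first_hit_prob sigma rho q s (b :: w) w s' n)) = 1)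
  (p : R) (hp : 0 < p < 1) :
  alpha_system sigma rho p (fun b s s' => alpha_tilde sigma rho p [:: b] s s')
  /\ forall a : L -> S -> S -> R, alpha_system sigma rho p a ->
       forall b s s', a b s s' = alpha_tilde sigma rho p [:: b] s s'.
Proof.
have hp' : 0 <= p <= 1 by case/andP: hp => h1 h2; rewrite !ltW.
set alpha := fun b s s' => alpha_tilde sigma rho p [:: b] s s'.
have alphaE b s s' : alpha b s s' = limn (fun N => Pn sigma rho p N [:: b] s s').
  by rewrite /alpha /alpha_tilde /hit_prob /series /=.
have Pn_alpha N b s s' : Pn sigma rho p N [:: b] s s' <= alpha b s s'.
  by rewrite alphaE; apply: Pn_le_lim.
have alpha_ge0 b s s' : 0 <= alpha b s s'.
  by apply: le_trans (Pn_alpha 0%N b s s'); apply: Pn_ge0.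
have alpha_sum b s : \sum_(s' : S) alpha b s s' = 1.
  have h : limn (series (fun n => \sum_(s' : S) first_hit_prob sigma rho p s [:: b] [::] s' n))
      = \sum_(s' : S) alpha b s s'.
    apply: cvg_lim; first exact: Rhausdorff.
    have -> : series (fun n => \sum_(s' : S) first_hit_prob sigma rho p s [:: b] [::] s' n)
       = (fun N => \sum_(s' : S) Pn sigma rho p N [:: b] s s').
      by apply/funext => N; rewrite /series /= /Pn /fh exchange_big.
    under [X in (_ --> X)%classic]eq_bigr do rewrite alphaE.
    apply: cvg_big; first exact: add_continuous.
    by move=> s' _; apply: Pn_cvg.
  by rewrite -h standing.
set F := fun (a : L -> S -> S -> R) b s s' =>
  p * Qx sigma rho a true b s s' + (1 - p) * Qx sigma rho a false b s s'.
have step a N b s s' : (forall c t t', 0 <= a c t t') ->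
    (forall c t t', Pn sigma rho p N [:: c] t t' <= a c t t') ->
    Pn sigma rho p N.+1 [:: b] s s' <= F a b s s'.
  move=> a0 aN; rewrite PnS_cons !cats0 /F !Qx_G.
  have HG x : Pn sigma rho p N (rho s x b) (sigma s x b) s' <= G a (rho s x b) (sigma s x b) s'.
    apply: le_trans (Pn_G sigma rho hp' N _ _ _) _.
    by apply: G_mono => // c t t' /=; apply: (Pn_ge0 sigma rho hp').
  apply: lerD; apply: ler_wpM2l; [exact: p_ge0 hp'|exact: HG|exact: q_ge0 hp'|exact: HG].
have Fsum a b s : (forall c t, \sum_(t' : S) a c t t' = 1) -> \sum_(s' : S) F a b s s' = 1.
  move=> a1; rewrite /F big_split /= -!mulr_sumr.
  under eq_bigr do rewrite Qx_G.
  under [X in _ + _ * X]eq_bigr do rewrite Qx_G.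
  by rewrite !G_sum // !mulr1 subrKC.
have alpha_fix b s s' : alpha b s s' = F alpha b s s'.
  apply: (sum_eq_le (x := alpha b s) (y := F alpha b s)); last first.
    by rewrite alpha_sum Fsum.
  move=> t; rewrite alphaE; apply: (lim_Pn_le hp') => -[|N].
    rewrite (Pn0 sigma rho p) /F !Qx_G; apply: addr_ge0; apply: mulr_ge0;
      [exact: p_ge0 hp'|exact: G_ge0|exact: q_ge0 hp'|exact: G_ge0].
  by apply: step => // c t0 t'; apply: Pn_alpha.
split.
  split; first exact: alpha_ge0.
  split; first exact: alpha_sum.
  exact: alpha_fix.
move=> a [a0 [a1 afix]].
have Pn_a N b s s' : Pn sigma rho p N [:: b] s s' <= a b s s'.
  elim: N b s s' => [|N IH] b s s'; first by rewrite (Pn0 sigma rho p).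
  by rewrite afix; apply: step.
move=> b s s'; symmetry.
apply: (sum_eq_le (x := alpha b s) (y := a b s)); last by rewrite alpha_sum a1.
move=> t; rewrite alphaE; apply: (lim_Pn_le hp') => N; exact: Pn_a.
Qed.
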